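(* For every $n\ge 3$ and every field $\mathrm{k}$ of characteristic zero, the pre-WDVV ring $R_n$ is a Koszul algebra.
   Context: A stable $2$-partition of $\{1,\dots,n\}$ is an unordered partition $\sigma=S_1/S_2$ of $\{1,\dots,n\}$ into two blocks with $|S_1|,|S_2|\ge 2$; $P_n$ denotes the set of these. For $\sigma=S_1/S_2$, $\tau=T_1/T_2$ in $P_n$, $a(\sigma,\tau)$ is the number of nonempty pairwise distinct sets among $S_i\cap T_j$, $1\le i,j\le 2$. The pre-WDVV ring is the standard graded algebra $R_n=\mathrm{k}[x_\sigma:\sigma\in P_n]/J_n$, where $J_n$ is the ideal generated by all products $x_\sigma x_\tau$ with $a(\sigma,\tau)=4$. *)

(* Defs.v *)
From HB Require Import structures.
From mathcomp Require Import all_boot all_order all_algebra.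
From mathcomp Require Import mpoly.
Set Implicit Arguments. Unset Strict Implicit. Unset Printing Implicit Defensive.
Import GRing.Theory.
Local Open Scope ring_scope.

(* A stable 2-partition of {1..n} (modelled as 'I_n) is an unordered pair of
   blocks {S, complement S}, both of size >= 2: a set of two sets. *)
Definition is_stable2 (n : nat) (s : {set {set 'I_n}}) : bool :=
  [exists S : {set 'I_n},
     [&& s == [set S; ~: S], (1 < #|S|)%N & (1 < #|~: S|)%N ]].

Definition P (n : nat) := {s : {set {set 'I_n}} | is_stable2 s}.

Definition a_int (n : nat) (s t : P n) : nat :=
  #| [set S :&: T | S in val s, T in val t] :\ set0 |.

Definition nvars (n : nat) : nat := #|{: P n}|.

Definition xvar (k : fieldType) (n : nat) (s : P n) : {mpoly k[nvars n]} :=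
  'X_(enum_rank s).

Definition inJ (k : fieldType) (n : nat) (p : {mpoly k[nvars n]}) : Prop :=
  exists c : P n -> P n -> {mpoly k[nvars n]},
    p = \sum_(s : P n) \sum_(t : P n | a_int s t == 4%N)
          c s t * (xvar k s * xvar k t).

Definition inJrow (k : fieldType) (n m : nat)
  (v : 'rV[{mpoly k[nvars n]}]_m) : Prop := forall j, inJ (v 0 j).

(* R_n = S/J_n with S = k[x_sigma] (standard graded) is Koszul:
   the residue field k = R_n / (x_sigma) has a linear graded free resolution
     ... -> R_n(-2)^{b 2} --M 1--> R_n(-1)^{b 1} --M 0--> R_n^{b 0} = R_n -> k -> 0,
   i.e. all matrices have entries that are linear forms (homogeneous of degree 1,
   possibly zero).  Maps act on row vectors (v |-> v *m M i); exactness is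
   stated over S modulo J_n. *)
Definition preWDVV_Koszul (k : fieldType) (n : nat) : Prop :=
  exists (b : nat -> nat)
         (M : forall i : nat, 'M[{mpoly k[nvars n]}]_(b i.+1, b i)),
    [/\ b 0%N = 1%N,
        (forall i r c, M i r c \is 1.-homog),
        (* exactness at R_n: kernel of augmentation R_n -> k is im (M 0) *)
        (forall v : 'rV[{mpoly k[nvars n]}]_(b 0%N),
            (forall j, (v 0 j) @_ 0%MM = 0) <->
            exists w : 'rV_(b 1%N), inJrow (v - w *m M 0%N)) &
        (* exactness at R_n(-i-1)^{b (i+1)} *)
        (forall i (v : 'rV[{mpoly k[nvars n]}]_(b i.+1)),
            inJrow (v *m M i) <->
            exists w : 'rV_(b i.+2), inJrow (v - w *m M i.+1))].

(* Main.v *)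
Require Import Defs.
From HB Require Import structures.
From mathcomp Require Import all_boot all_order all_algebra.
From mathcomp Require Import mpoly.
From mathcomp Require Import zify ring.
Set Implicit Arguments. Unset Strict Implicit. Unset Printing Implicit Defensive.
Import GRing.Theory.
Local Open Scope ring_scope.

Section Gen.
Variables (k : fieldType) (N : nat) (E : rel 'I_N).
Local Notation R := {mpoly k[N]}.
Implicit Types (X Y A B : {set 'I_N}) (b x c d : 'I_N) (s w t u : seq 'I_N).

Definition JJ (p : R) : Prop := exists c : 'I_N -> 'I_N -> R,
  p = \sum_i \sum_(j | E i j) c i j * ('X_i * 'X_j).

Lemma JJ0 : JJ 0.
Proof. by exists (fun _ _ => 0); rewrite big1 // => i _; rewrite big1 // => j _; rewrite mul0r. Qed.

Lemma JJD p q : JJ p -> JJ q -> JJ (p + q).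
Proof.
move=> [c1 ->] [c2 ->]; exists (fun i j => c1 i j + c2 i j).
rewrite -big_split; apply: eq_bigr => i _; rewrite -big_split.
by apply: eq_bigr => j _; rewrite mulrDl.
Qed.

Lemma JJM q p : JJ p -> JJ (q * p).
Proof.
move=> [c ->]; exists (fun i j => q * c i j).
rewrite mulr_sumr; apply: eq_bigr => i _; rewrite mulr_sumr.
by apply: eq_bigr => j _; rewrite mulrA.
Qed.

Lemma JJN p : JJ p -> JJ (- p).
Proof. by move=> H; rewrite -mulN1r; apply: JJM. Qed.

Lemma JJB p q : JJ p -> JJ q -> JJ (p - q).
Proof. by move=> Hp Hq; apply: JJD => //; apply: JJN. Qed.

Lemma JJ_sum (I : Type) (r : seq I) (P : pred I) (F : I -> R) :
  (forall i, P i -> JJ (F i)) -> JJ (\sum_(i <- r | P i) F i).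
Proof. by move=> H; apply: (big_ind JJ) => //; [apply: JJ0 | apply: JJD]. Qed.

Lemma JJgen a b : E a b -> JJ ('X_a * 'X_b).
Proof.
move=> Eab; exists (fun i j => if (i == a) && (j == b) then 1 else 0).
rewrite (bigD1 a) //= (bigD1 b) //= !eqxx /= mul1r big1 ?addr0; last first.
  by move=> j /andP [_ /negbTE ->]; rewrite mul0r.
rewrite big1 ?addr0 // => i /negbTE ->; rewrite big1 // => j _; by rewrite mul0r.
Qed.

Lemma JJeq p q : p = q -> JJ p -> JJ q. Proof. by move=> ->. Qed.

Definition II (X : {set 'I_N}) (p : R) : Prop :=
  exists q : 'I_N -> R, JJ (p - \sum_(c in X) q c * 'X_c).

Definition goodm (X : {set 'I_N}) (m : 'X_{1..N}) : bool :=
  [exists c in X, (0 < m c)%N] ||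
  [exists a, exists b, E a b && (U_(a) + U_(b) <= m)%MM].

Lemma coefMX0 (r : R) (e m : 'X_{1..N}) : ~~ (e <= m)%MM -> (r * 'X_[e])@_m = 0.
Proof.
move=> Hn; apply/eqP; rewrite mcoeff_eq0; apply/negP => Hm.
move: (perm_mem (msuppMX r e) m); rewrite Hm => /esym /mapP [m' _ Em].
by move: Hn; rewrite Em lem_addr.
Qed.

Lemma II_coef X p : II X p -> forall m, ~~ goodm X m -> p@_m = 0.
Proof.
move=> [q [c Hc]] m; rewrite /goodm negb_or => /andP [H1 H2].
have -> : p = (p - \sum_(c in X) q c * 'X_c) + \sum_(c in X) q c * 'X_c.
  by rewrite subrK.
rewrite Hc mcoeffD !raddf_sum /= big1 ?add0r; last first.
  move=> i _; rewrite raddf_sum /= big1 // => j Eij.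
  rewrite -mpolyXD; apply: coefMX0.
  by apply/negP => Hm; move: H2; rewrite negb_exists => /forallP /(_ i); rewrite negb_exists => /forallP /(_ j); rewrite Eij Hm.
rewrite big1 // => c0 Hc0; apply: coefMX0; rewrite lep1mP negbK.
rewrite -leqn0 leqNgt; apply/negP => Hm; move: H1; rewrite negb_exists => /forallP /(_ c0).
by rewrite Hc0 Hm.
Qed.

Lemma II0 X : II X 0.
Proof. by exists (fun _ => 0); rewrite big1 ?subr0; [apply: JJ0 | move=> c _; rewrite mul0r]. Qed.

Lemma IID X p q : II X p -> II X q -> II X (p + q).
Proof.
move=> [q1 H1] [q2 H2]; exists (fun c => q1 c + q2 c).
apply: JJeq (JJD H1 H2).
rewrite [Y in _ = _ - Y](eq_bigr (fun c => q1 c * 'X_c + q2 c * 'X_c)); last by move=> c _; rewrite mulrDl.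
by rewrite big_split /= opprD addrACA.
Qed.

Lemma IIJ (X : {set 'I_N}) (p : R) : JJ p -> II X p.
Proof. by move=> H; exists (fun _ => 0); rewrite big1 ?subr0 // => c _; rewrite mul0r. Qed.

Lemma IIX (X : {set 'I_N}) (r : R) (c : 'I_N) : c \in X -> II X (r * 'X_c).
Proof.
move=> Hc; exists (fun d => if d == c then r else 0).
rewrite (bigD1 c) //= eqxx big1 ?addr0 ?subrr; first exact: JJ0.
by move=> d /andP [_ /negbTE ->]; rewrite mul0r.
Qed.

Lemma coef_II X p : (forall m, ~~ goodm X m -> p@_m = 0) -> II X p.
Proof.
move=> H; rewrite (mpolyE p) big_seq; apply: (big_ind (II X)).
- exact: II0.
- exact: IID.
move=> m Hm.
have : goodm X m by apply/negPn/negP => /H /eqP; rewrite mcoeff_eq0 Hm.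
case/orP => [/existsP [c /andP [Hc Hmc]] | /existsP [a /existsP [b /andP [Eab Hle]]]].
- have Hle : (U_(c) <= m)%MM by rewrite lep1mP -lt0n.
  have -> : 'X_[m] = 'X_[m - U_(c)] * 'X_c :> R by rewrite -mpolyXD submK.
  rewrite scalerAl; exact: IIX.
- have -> : 'X_[m] = 'X_[m - (U_(a) + U_(b))] * ('X_a * 'X_b) :> R.
    by rewrite -!mpolyXD submK.
  rewrite scalerAl; apply: IIJ; apply: JJM; exact: JJgen.
Qed.

Definition Nb (c : 'I_N) : {set 'I_N} := [set d | E c d || E d c].

Lemma colon (X : {set 'I_N}) (b : 'I_N) (p : R) :
  b \notin X -> II X ('X_b * p) -> II (X :|: Nb b) p.
Proof.
move=> bX H; apply: coef_II => m Hm.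
have := II_coef H (m := (U_(b) + m)%MM); rewrite mulrC mcoeffMX; apply.
apply/negP; case/orP.
- case/existsP => c /andP [cX]; rewrite mnmDE mnm1E => Hc.
  have cb : (b == c) = false by apply/negP => /eqP Ebc; move: bX; rewrite Ebc cX.
  rewrite cb add0n in Hc.
  apply: (negP Hm); apply/orP; left; apply/existsP; exists c; by rewrite inE cX Hc.
- case/existsP => a /existsP [a' /andP [Eaa /mnm_lepP Hle]].
  case: (eqVneq a b) => [eab | nab].
  + subst a; apply: (negP Hm); apply/orP; left; apply/existsP; exists a'.
    rewrite !inE Eaa orbT /=.
    have := Hle a'; rewrite !mnmDE !mnm1E eqxx.
    case: (eqVneq b a') => [<-|nba] /=; [lia | by rewrite add0n].
  + case: (eqVneq a' b) => [ea'b | na'b].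
    * subst a'; apply: (negP Hm); apply/orP; left; apply/existsP; exists a.
      rewrite !inE Eaa orbT /=.
      have := Hle a; rewrite !mnmDE !mnm1E eqxx eq_sym (negbTE nab) /=; lia.
    * apply: (negP Hm); apply/orP; right; apply/existsP; exists a; apply/existsP; exists a'.
      rewrite Eaa /=; apply/mnm_lepP => i; have := Hle i; rewrite !mnmDE !mnm1E.
      case: (eqVneq b i) => [<-|nbi]; last by rewrite add0n.
      by rewrite (negbTE nab) (negbTE na'b).
Qed.

Definition ltS (X : {set 'I_N}) (c : 'I_N) : {set 'I_N} := [set x in X | (x < c)%N].
Definition nxt (X : {set 'I_N}) (c : 'I_N) : {set 'I_N} := ltS X c :|: Nb c.

Fixpoint valid (X : {set 'I_N}) (w : seq 'I_N) : bool :=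
  if w is c :: w' then (c \in X) && valid (nxt X c) w' else true.

Fixpoint coef (X : {set 'I_N}) (t u : seq 'I_N) : R :=
  if t is c :: w then
    (if (u == w) && valid (ltS X c) w then 'X_c else 0) -
    (if u is c' :: u' then (if c' == c then coef (nxt X c) w u' else 0) else 0)
  else 0.

Lemma ltS_sub X c : ltS X c \subset X.
Proof. by apply/subsetP => x; rewrite inE => /andP []. Qed.

Lemma ltS_mono X Y c : X \subset Y -> ltS X c \subset ltS Y c.
Proof.
move=> /subsetP XY; apply/subsetP => x; rewrite !inE => /andP [xX ->].
by rewrite XY.
Qed.

Lemma nxt_mono X Y c : X \subset Y -> nxt X c \subset nxt Y c.
Proof. by move=> XY; apply: setSU; apply: ltS_mono. Qed.

Lemma valid_mono w : forall X Y, X \subset Y -> valid X w -> valid Y w.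
Proof.
elim: w => [//|c w IH] X Y XY /= /andP [cX vw].
rewrite (subsetP XY _ cX) /=; apply: IH vw; exact: nxt_mono.
Qed.

Lemma valid_cap w : forall X Y, valid X w -> valid Y w -> valid (X :&: Y) w.
Proof.
elim: w => [//|c w IH] X Y /= /andP [cX vX] /andP [cY vY].
rewrite inE cX cY /=; apply: valid_mono (IH _ _ vX vY).
apply/subsetP => x; rewrite !inE.
by case: (x \in X); case: (x \in Y); case: (x < c)%N; case: (E c x); case: (E x c).
Qed.

Lemma coef_supp t : forall X u, valid X t -> coef X t u != 0 -> valid X u.
Proof.
elim: t => [|c w IH] X u /=; first by rewrite eqxx.
move=> /andP [cX vw].
case: (boolP ((u == w) && valid (ltS X c) w)) => [/andP [/eqP -> v1] _|_].
  exact: valid_mono (ltS_sub X c) v1.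
case: u => [|c' u'] /=; first by rewrite subrr eqxx.
case: (eqVneq c' c) => [->|_]; last by rewrite subrr eqxx.
rewrite sub0r oppr_eq0 => /(IH _ _ vw) ->; by rewrite cX.
Qed.

Lemma coef_loc X Y d w u : ltS X d = ltS Y d -> coef X (d :: w) u = coef Y (d :: w) u.
Proof. by move=> H; rewrite /= /nxt H. Qed.

Lemma ltS_ltS X c d : (d < c)%N -> ltS (ltS X c) d = ltS X d.
Proof.
move=> dc; apply/setP => x; rewrite !inE.
case xd: (x < d)%N; rewrite ?andbF // !andbT.
by rewrite (ltn_trans xd dc) andbT.
Qed.

Lemma P1 w : forall X Y u, X \subset Y -> valid X w ->
  coef X w u = (if valid X u then coef Y w u else 0).
Proof.
elim: w => [|d w IH] X Y u XY /=; first by case: (valid X u).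
move/andP => [dX vw].
have e1 : (u == w) && valid (ltS X d) w = valid X u && ((u == w) && valid (ltS Y d) w).
  case: (eqVneq u w) => [->|]; last by rewrite andbF.
  rewrite /=; apply/idP/idP.
  - move=> h; rewrite (valid_mono (ltS_sub X d) h) (valid_mono (ltS_mono d XY) h) //.
  - move/andP => [h1 h2]; apply: valid_mono (valid_cap h1 h2).
    apply/subsetP => x; rewrite !inE => /andP [xX /andP [_ ->]]; by rewrite xX.
have e2 : (if u is c' :: u' then (if c' == d then coef (nxt X d) w u' else 0) else 0) =
          (if valid X u then
             (if u is c' :: u' then (if c' == d then coef (nxt Y d) w u' else 0) else 0)
           else 0).
  case: u {e1} => [|c' u'] //=.
  case: (eqVneq c' d) => [->|_]; last by case: ifP.
  by rewrite dX /= (IH _ (nxt Y d)) //; apply: nxt_mono.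
rewrite e1 e2; case: (valid X u) => //=; by rewrite subr0.
Qed.

Lemma NbJ c d : d \in Nb c -> JJ ('X_c * 'X_d).
Proof. by rewrite inE => /orP [h|h]; [apply: JJgen | rewrite mulrC; apply: JJgen]. Qed.

Lemma P2 c w : forall X Y u, X \subset Y -> Y \subset X :|: Nb c ->
  valid Y w -> ~~ valid X w -> valid X u -> JJ ('X_c * coef Y w u).
Proof.
elim: w => [|d w IH] X Y u XY YX //=.
move/andP => [dY vYw] nvX vXu.
rewrite mulrBr; apply: JJB.
- case: ifP => [/andP [/eqP Euw v2] | _]; last by rewrite mulr0; apply: JJ0.
  case: (boolP (d \in X)) => dX.
  + exfalso; move: nvX; rewrite dX /=; apply/negP/negPn.
    have vXw : valid X w by rewrite -Euw.
    apply: valid_mono (valid_cap vXw v2).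
    apply/subsetP => x; rewrite !inE => /andP [xX /andP [_ ->]]; by rewrite xX.
  + apply: NbJ; move: (subsetP YX _ dY); by rewrite inE (negbTE dX).
- case: u vXu => [|c' u'] /=; first by rewrite mulr0 => _; apply: JJ0.
  move/andP => [c'X vu']; case: ifP => [/eqP Ec|_]; last by rewrite mulr0; apply: JJ0.
  subst c'; rewrite c'X /= in nvX.
  apply: (IH (nxt X d) (nxt Y d)) => //; first exact: nxt_mono.
  apply/subsetP => x; rewrite !inE => /orP [/andP [xY xd]|->]; last by rewrite !orbT.
  move: (subsetP YX _ xY); rewrite !inE => /orP [->|->]; by rewrite ?xd ?orbT.
Qed.

Lemma sum_tupleS n (F : seq 'I_N -> R) :
  \sum_(t : n.+1.-tuple 'I_N) F t = \sum_(x : 'I_N) \sum_(t : n.-tuple 'I_N) F (x :: t).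
Proof.
rewrite pair_big /=.
rewrite (reindex (fun p : 'I_N * n.-tuple 'I_N => [tuple of p.1 :: p.2])) //=.
exists (fun t : n.+1.-tuple 'I_N => (thead t, [tuple of behead t])).
  by move=> [x t] _; congr pair => //; apply: val_inj.
by move=> t _; case/tupleP: t => x t /=; apply: val_inj.
Qed.

Lemma sum_tuple1 n (w : seq 'I_N) (F : seq 'I_N -> R) : size w = n ->
  \sum_(t : n.-tuple 'I_N) (if tval t == w then F t else 0) = F w.
Proof.
move=> Hw; have Hw' : size w == n by rewrite Hw.
rewrite (bigD1 (Tuple Hw')) //= eqxx big1 ?addr0 // => t /negbTE ne.
case: eqP => // e; move: ne; suff -> : t == Tuple Hw' by [].
by rewrite -val_eqE /= e.
Qed.

Lemma sum_tuple0 (F : seq 'I_N -> R) : \sum_(t : 0.-tuple 'I_N) F t = F [::].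
Proof.
rewrite -(@sum_tuple1 0 [::] F) //; apply: eq_bigr => t _; by rewrite tuple0.
Qed.

Lemma sum_coef_cons n X c w (G : seq 'I_N -> R) : size w = n.+1 ->
  \sum_(s : n.+1.-tuple 'I_N) coef X (c :: w) s * G s =
  (if valid (ltS X c) w then 'X_c * G w else 0) -
  \sum_(s : n.-tuple 'I_N) coef (nxt X c) w s * G (c :: s).
Proof.
move=> Hw; rewrite /= (eq_bigr (fun s : n.+1.-tuple 'I_N =>
   (if tval s == w then (if valid (ltS X c) w then 'X_c * G s else 0) else 0) -
   (if tval s is c' :: u' then (if c' == c then coef (nxt X c) w u' else 0) else 0) * G s));
  last first.
  move=> s _; rewrite mulrBl; congr (_ - _).
  by case: (tval s == w); case: (valid _ _) => /=; rewrite ?mul0r.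
rewrite sumrB (sum_tuple1 (fun s => if valid (ltS X c) w then 'X_c * G s else 0)) //.
congr (_ - _).
rewrite (@sum_tupleS n (fun s => (if s is c' :: u' then (if c' == c then coef (nxt X c) w u' else 0) else 0) * G s)).
rewrite (bigD1 c) //= [X in _ + X]big1 ?addr0; last first.
  by move=> x /negbTE xc; apply: big1 => t _; rewrite xc mul0r.
by apply: eq_bigr => t _; rewrite eqxx.
Qed.

Lemma sum_coef_inner n X c w u : size u = n ->
  \sum_(s : n.-tuple 'I_N) coef (nxt X c) w s * coef X (c :: s) u =
  (if valid (ltS X c) u then coef (nxt X c) w u * 'X_c else 0) -
  (if u is c' :: u' then (if c' == c then
     \sum_(s : n.-tuple 'I_N) coef (nxt X c) w s * coef (nxt X c) s u' else 0) else 0).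
Proof.
move=> Hu /=.
rewrite (eq_bigr (fun s : n.-tuple 'I_N =>
   (if tval s == u then coef (nxt X c) w s * (if valid (ltS X c) s then 'X_c else 0) else 0) -
   coef (nxt X c) w s * (if u is c' :: u' then (if c' == c then coef (nxt X c) s u' else 0) else 0)));
  last first.
  move=> s _; rewrite mulrBr; congr (_ - _).
  rewrite eq_sym; case: eqP => _ //=; last by rewrite mulr0.
rewrite sumrB (sum_tuple1 (fun s => coef (nxt X c) w s * (if valid (ltS X c) s then 'X_c else 0))) //.
congr (_ - _); first by case: (valid _ _); rewrite ?mulr0.
case: (u) => [|c' u']; first by rewrite big1 // => s _; rewrite mulr0.
case: (c' == c); last by rewrite big1 // => s _; rewrite mulr0.
by [].
Qed.

Lemma DD_step n X c w u : size w = n.+1 -> size u = n -> valid (nxt X c) w ->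
  JJ (if u is c' :: u' then (if c' == c then
     \sum_(s : n.-tuple 'I_N) coef (nxt X c) w s * coef (nxt X c) s u' else 0) else 0) ->
  JJ (\sum_(s : n.+1.-tuple 'I_N) coef X (c :: w) s * coef X s u).
Proof.
move=> Hw Hu vw HM.
rewrite (@sum_coef_cons n X c w (fun s => coef X s u) Hw) (@sum_coef_inner n X c w u Hu).
rewrite opprB addrCA; apply: JJD => //.
have XB : ltS X c \subset nxt X c by apply: subsetUl.
case: (boolP (valid (ltS X c) w)) => h.
- have -> : coef X w u = coef (ltS X c) w u.
    clear HM; case: w Hw vw h => [//|d w'] _ _ /= /andP [dX _].
    by apply: coef_loc; rewrite ltS_ltS //; move: dX; rewrite inE => /andP [_ ->].
  rewrite (P1 _ XB h); case: (valid _ u); last by rewrite mulr0 subrr; exact: JJ0.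
  by rewrite [X in _ - X]mulrC subrr; exact: JJ0.
- rewrite sub0r; case: (boolP (valid (ltS X c) u)) => hu; last by rewrite oppr0; apply: JJ0.
  apply: JJN; rewrite mulrC; apply: (P2 (X := ltS X c)) => //.
Qed.

Lemma DD_coef n : forall X (t u : seq 'I_N), size t = n.+2 -> size u = n -> valid X t ->
  JJ (\sum_(s : n.+1.-tuple 'I_N) coef X t s * coef X s u).
Proof.
elim: n => [|n IH] X [|c w] u //= [Ht] Hu /andP [cX vw];
  apply: DD_step => //.
- by case: u Hu => [|? ?] //= _; exact: JJ0.
- case: u Hu => [//|c' u'] /= [Hu]; case: (c' == c); last exact: JJ0.
  exact: IH.
Qed.

Definition Dm X n (f : seq 'I_N -> R) u : R :=
  \sum_(t : n.+1.-tuple 'I_N) f t * coef X t u.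
Definition supp X n (f : seq 'I_N -> R) := forall t, size t = n -> ~~ valid X t -> f t = 0.
Definition Ex n X := forall f, supp X n.+1 f -> (forall u, size u = n -> JJ (Dm X n f u)) ->
  exists g, supp X n.+2 g /\ forall t, size t = n.+1 -> JJ (f t - Dm X n.+1 g t).

Lemma Dm_supp X n f u : supp X n.+1 f -> ~~ valid X u -> Dm X n f u = 0.
Proof.
move=> sf nu; apply: big1 => t _.
case: (boolP (valid X t)) => vt; last by rewrite (sf t (size_tuple t) vt) mul0r.
case: (eqVneq (coef X t u) 0) => [->|ne]; first by rewrite mulr0.
by move: nu; rewrite (coef_supp vt ne).
Qed.

Lemma Dm_J X n f u : (forall t, size t = n.+1 -> JJ (f t)) -> JJ (Dm X n f u).
Proof.
move=> H; apply: JJ_sum => t _; rewrite mulrC; apply: JJM; apply: H; exact: size_tuple.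
Qed.

Lemma Dm_ext X n f g u : (forall t, size t = n.+1 -> f t = g t) -> Dm X n f u = Dm X n g u.
Proof. by move=> H; apply: eq_bigr => t _; rewrite H // size_tuple. Qed.

Lemma Dm_loc X Y n f u : (forall t, size t = n.+1 -> valid Y t -> coef X t u = coef Y t u) ->
  supp Y n.+1 f -> Dm X n f u = Dm Y n f u.
Proof.
move=> H sf; apply: eq_bigr => t _.
case: (boolP (valid Y t)) => vt; first by rewrite H // size_tuple.
by rewrite (sf t (size_tuple t) vt) !mul0r.
Qed.

Lemma DDm X n g u : supp X n.+2 g -> size u = n -> JJ (Dm X n (Dm X n.+1 g) u).
Proof.
move=> sg Hu; rewrite /Dm.
rewrite (eq_bigr (fun s : n.+1.-tuple 'I_N => \sum_(t : n.+2.-tuple 'I_N) g t * (coef X t s * coef X s u)));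
  last by move=> s _; rewrite mulr_suml; apply: eq_bigr => t _; rewrite mulrA.
rewrite exchange_big /=; apply: JJ_sum => t _; rewrite -mulr_sumr.
case: (boolP (valid X t)) => vt; last by rewrite (sg t (size_tuple t) vt) mul0r; apply: JJ0.
by apply: JJM; apply: DD_coef => //; rewrite size_tuple.
Qed.

Lemma coef_bb A b w s : coef A (b :: w) (b :: s) = - coef (nxt A b) w s.
Proof.
rewrite /= eqxx; case: eqP => [<-|_] /=; last by rewrite sub0r.
by rewrite inE ltnn andbF /= sub0r.
Qed.

Lemma coef_xb A b x w s : (x < b)%N -> coef A (x :: w) (b :: s) = 0.
Proof.
move=> xb /=; have -> : (b == x) = false by apply/negbTE; rewrite neq_ltn xb orbT.
case: eqP => [<-|_] /=; last by rewrite subrr.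
by rewrite inE ltnNge (ltnW xb) andbF /= subrr.
Qed.

Lemma Dm_cons_b n A b f s : b \in A -> (forall x, x \in A -> (x <= b)%N) -> supp A n.+2 f ->
  Dm A n.+1 f (b :: s) = - Dm (nxt A b) n (fun w => f (b :: w)) s.
Proof.
move=> bA bmax sf; rewrite /Dm (@sum_tupleS n.+1 (fun t => f t * coef A t (b :: s))).
rewrite (eq_bigr (fun x => \sum_(t : n.+1.-tuple 'I_N)
   (if x == b then - (f (b :: t) * coef (nxt A b) t s) else 0))); last first.
  move=> x _; apply: eq_bigr => t _.
  case: eqP => [->|xb]; first by rewrite coef_bb mulrN.
  case: (boolP (x \in A)) => xA; last first.
    by rewrite (sf (x :: t)) ?mul0r //= ?size_tuple // (negbTE xA).
  rewrite coef_xb ?mulr0 // ltn_neqAle bmax // andbT.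
  by apply/negP => /eqP /val_inj.
rewrite (bigD1 b) //= [X in _ + X]big1 ?addr0; last by move=> x /negbTE ->; rewrite big1.
rewrite -sumrN; apply: eq_bigr => t _; by rewrite eqxx.
Qed.

Lemma ltS_D1 A b x : (x <= b)%N -> ltS (A :\ b) x = ltS A x.
Proof.
move=> xb; apply/setP => y; rewrite !inE.
case yx: (y < x)%N; rewrite ?andbF // !andbT.
have -> : (y != b) = true by rewrite neq_ltn (leq_trans yx xb).
by [].
Qed.

Definition Hv n A b := forall f, supp A n.+1 f -> (forall u, size u = n -> JJ (Dm A n f u)) ->
  exists z, supp (nxt A b) n.+1 z /\ forall s, size s = n -> JJ (f (b :: s) - Dm (nxt A b) n z s).

Lemma cone_step n A b : b \in A -> (forall x, x \in A -> (x <= b)%N) ->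
  Ex n (A :\ b) -> Hv n A b -> Ex n A.
Proof.
move=> bA bmax ExA' Hvb f sf DJ.
have [z [sz Hz]] := Hvb f sf DJ.
pose h := fun s : seq 'I_N => if s is x :: w then (if x == b then z w else 0) else 0.
have sh : supp A n.+2 h.
  move=> [|x w] //= [Hw]; case: eqP => [->|] //; rewrite bA /= => nv; exact: sz.
have F3 : forall u t, valid (A :\ b) t -> coef A t u = coef (A :\ b) t u.
  move=> u [|x w] //= /andP [xA _]; apply: coef_loc; rewrite ltS_D1 //.
  by apply: bmax; move: xA; rewrite inE => /andP [].
pose f' := fun t => f t + Dm A n.+1 h t.
pose f'' := fun t => if valid (A :\ b) t then f' t else 0.
have sf'' : supp (A :\ b) n.+1 f'' by move=> t _ /negbTE nv; rewrite /f'' nv.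
have c1 : forall t, size t = n.+1 -> JJ (f'' t - f' t).
  move=> t Ht; rewrite /f''; case: ifP => vA't; first by rewrite subrr; apply: JJ0.
  rewrite sub0r; apply: JJN.
  case: (boolP (valid A t)) => vAt; last first.
    by rewrite /f' (sf t Ht vAt) (Dm_supp sh vAt) addr0; apply: JJ0.
  case: t Ht vAt vA't => [//|x w] /= [Hw] /andP [xA vw] vA't.
  case: (eqVneq x b) => [exb|nxb].
  - subst x; rewrite /f' Dm_cons_b // (@Dm_ext _ n _ z) //; last by move=> t _ /=; rewrite eqxx.
    exact: Hz.
  - exfalso; move: vA't; rewrite !inE nxb xA /= /nxt ltS_D1 ?vw //; exact: bmax.
have c2 : forall u, size u = n -> JJ (Dm (A :\ b) n f'' u).
  move=> u Hu; rewrite -(@Dm_loc A) //; last by move=> t _ vt; apply: F3.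
  have -> : Dm A n f'' u = Dm A n (fun t => f'' t - f' t) u + Dm A n f u + Dm A n (Dm A n.+1 h) u.
    rewrite /Dm -!big_split /=; apply: eq_bigr => t _; rewrite /f' /Dm; ring.
  apply: JJD; first apply: JJD.
  - by apply: Dm_J.
  - exact: DJ.
  - exact: DDm.
have [g' [sg' Hg']] := ExA' f'' sf'' c2.
exists (fun t => g' t - h t); split.
  move=> t Ht nv; rewrite (sh t Ht nv) subr0; apply: sg' => //.
  apply: contra nv; apply: valid_mono; exact: subD1set.
move=> t Ht.
have -> : Dm A n.+1 (fun t => g' t - h t) t = Dm (A :\ b) n.+1 g' t - Dm A n.+1 h t.
  rewrite -(@Dm_loc A) //; last by move=> t0 _ vt; apply: F3.
  by rewrite /Dm -sumrB; apply: eq_bigr => t0 _; rewrite mulrBl.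
have := JJB (Hg' t Ht) (c1 t Ht); apply: JJeq; rewrite /f'; ring.
Qed.

Lemma Dm0 X f : Dm X 0 f [::] = \sum_x f [:: x] * 'X_x.
Proof.
rewrite /Dm (@sum_tupleS 0 (fun t => f t * coef X t [::])); apply: eq_bigr => x _.
by rewrite (@sum_tuple0 (fun t => f (x :: t) * coef X (x :: t) [::])) /= subr0.
Qed.

Lemma Hv0 A b : b \in A -> (forall x, x \in A -> (x <= b)%N) -> Hv 0 A b.
Proof.
move=> bA bmax f sf DJ.
have HI : II (ltS A b) ('X_b * f [:: b]).
  exists (fun x => - f [:: x]); apply: JJeq (DJ [::] erefl); rewrite Dm0.
  rewrite (bigD1 b) //= [Y in _ = _ - Y](eq_bigr (fun x => - (f [:: x] * 'X_x))); last by move=> x _; rewrite mulNr.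
  rewrite sumrN opprK mulrC; congr (_ + _).
  rewrite big_mkcond [RHS]big_mkcond /=; apply: eq_bigr => x _.
  case: (eqVneq x b) => [->|xb]; first by rewrite inE ltnn andbF.
  rewrite inE /=; case: (boolP (x \in A)) => xA /=.
    by rewrite ltn_neqAle bmax // andbT; case: eqP => // /val_inj e; move: xb; rewrite e eqxx.
  by rewrite (sf [:: x]) ?mul0r //= (negbTE xA).
have bnot : b \notin ltS A b by rewrite inE ltnn andbF.
have [q Hq] := colon bnot HI.
exists (fun s => if s is [:: x] then (if x \in nxt A b then q x else 0) else 0); split.
  by move=> [|x [|y s]] //= _; rewrite andbT => /negbTE ->.
move=> [|//] _; rewrite Dm0; apply: JJeq Hq; congr (_ - _).
by rewrite big_mkcond; apply: eq_bigr => x _; rewrite /nxt; case: ifP; rewrite ?mul0r.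
Qed.

Lemma HvS n A b : Ex n (nxt A b) -> b \in A -> (forall x, x \in A -> (x <= b)%N) -> Hv n.+1 A b.
Proof.
move=> ExB bA bmax f sf DJ; apply: (ExB (fun w => f (b :: w))).
  by move=> t Ht nv; apply: sf; rewrite /= ?Ht // bA.
move=> u Hu; have Hu' : size (b :: u) = n.+1 by rewrite /= Hu.
have := DJ (b :: u) Hu'; rewrite Dm_cons_b //.
by move/JJN; rewrite opprK.
Qed.

Lemma Ex_set0 n : Ex n set0.
Proof.
move=> f sf _; exists (fun _ => 0); split => // t Ht.
rewrite (sf t Ht); last by case: t Ht => //= x w _; rewrite inE.
rewrite /Dm big1 ?subr0 ?oppr0; first exact: JJ0.
by move=> t0 _; rewrite mul0r.
Qed.

Lemma Ex_card n : (forall A b, b \in A -> (forall x, x \in A -> (x <= b)%N) -> Hv n A b) ->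
  forall X, Ex n X.
Proof.
move=> H X; have [m] := ubnP #|X|; elim: m X => // m IHm X HX.
case: (set_0Vmem X) => [->|[x0 x0X]]; first exact: Ex_set0.
case: (arg_maxnP (fun i : 'I_N => nat_of_ord i) x0X) => b bX bm.
have bmax : forall x, x \in X -> (x <= b)%N by move=> x xX; exact: bm.
apply: (cone_step bX bmax); last exact: H.
have bX' : b \in X := bX.
apply: IHm; have := cardsD1 b X; rewrite bX' => /= HC; move: HX; by rewrite HC add1n ltnS.
Qed.

Lemma Ex_all n : forall X, Ex n X.
Proof.
elim: n => [|n IHn]; apply: Ex_card => A b bA bmax; first exact: Hv0.
exact: HvS.
Qed.

Lemma DDm_all X n g u : supp X n.+2 g -> size u = n -> JJ (Dm X n (Dm X n.+1 g) u).
Proof. exact: DDm. Qed.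

End Gen.

Section Final.
Variables (k : fieldType) (n : nat).
Local Notation NN := (nvars n).
Local Notation R := {mpoly k[NN]}.

Definition Erel : rel 'I_NN := fun i j => a_int (enum_val i) (enum_val j) == 4%N.

Lemma sumP_eq (c0 : 'I_NN -> 'I_NN -> R) :
  \sum_(s : P n) \sum_(t : P n | a_int s t == 4%N)
     c0 (enum_rank s) (enum_rank t) * (xvar k s * xvar k t) =
  \sum_i \sum_(j | Erel i j) c0 i j * ('X_i * 'X_j).
Proof.
rewrite (reindex (@enum_val _ (pred_of_simpl (pred_of_argType (P n))))) /=; last first.
  by exists enum_rank => x _; [apply: enum_valK | apply: enum_rankK].
apply: eq_bigr => i _.
rewrite (reindex (@enum_val _ (pred_of_simpl (pred_of_argType (P n))))) /=; last first.
  by exists enum_rank => x _; [apply: enum_valK | apply: enum_rankK].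
apply: eq_big => [j|j _]; first by [].
by rewrite /xvar !enum_valK.
Qed.

Lemma inJ_JJ (p : R) : inJ p <-> JJ Erel p.
Proof.
split.
- move=> [c ->]; exists (fun i j => c (enum_val i) (enum_val j)).
  rewrite -sumP_eq; apply: eq_bigr => s _; apply: eq_bigr => t _.
  by rewrite !enum_rankK.
- move=> [c0 ->]; exists (fun s t => c0 (enum_rank s) (enum_rank t)).
  by rewrite sumP_eq.
Qed.

Definition VA (i : nat) : {pred i.-tuple 'I_NN} := [pred t : i.-tuple 'I_NN | valid Erel setT t].
Arguments VA i : clear implicits.
Definition bb (i : nat) : nat := #|VA i|.
Definition wv i (r : 'I_(bb i)) : seq 'I_NN := tval (enum_val r).
Definition MM (i : nat) : 'M[R]_(bb i.+1, bb i) :=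
  \matrix_(r, c) coef k Erel setT (wv r) (wv c).

Arguments MM i : clear implicits.

Lemma wv_valid i (r : 'I_(bb i)) : valid Erel setT (wv r).
Proof. exact: (enum_valP r). Qed.

Lemma wv_size i (r : 'I_(bb i)) : size (wv r) = i.
Proof. exact: size_tuple. Qed.

Lemma wv_inj i : injective (@wv i).
Proof. by move=> r1 r2 /val_inj /enum_val_inj. Qed.

Lemma wv_onto i (u : seq 'I_NN) : size u = i -> valid Erel setT u ->
  exists r : 'I_(bb i), wv r = u.
Proof.
move=> Hu vu; have Hu' : size u == i by rewrite Hu.
have tin : Tuple Hu' \in VA i by exact: vu.
by exists (enum_rank_in tin (Tuple Hu')); rewrite /wv enum_rankK_in.
Qed.

Definition fv i (v : 'rV[R]_(bb i)) (s : seq 'I_NN) : R :=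
  \sum_(r : 'I_(bb i)) (if wv r == s then v 0 r else 0).

Lemma fv_wv i (v : 'rV[R]_(bb i)) r : fv v (wv r) = v 0 r.
Proof.
rewrite /fv (bigD1 r) //= eqxx big1 ?addr0 // => r' ne.
by case: eqP => // /wv_inj e; move: ne; rewrite e eqxx.
Qed.

Lemma supp_fv i (v : 'rV[R]_(bb i)) : supp Erel setT i (fv v).
Proof.
move=> t _ nv; apply: big1 => r _; case: eqP => // e.
by move: nv; rewrite -e wv_valid.
Qed.

Lemma sum_VA i (F : seq 'I_NN -> R) : (forall t : i.-tuple 'I_NN, ~~ valid Erel setT t -> F t = 0) ->
  \sum_(t : i.-tuple 'I_NN) F t = \sum_(r : 'I_(bb i)) F (wv r).
Proof.
move=> H; rewrite (bigID (fun t : i.-tuple 'I_NN => t \in VA i)) /= [X in _ + X]big1 ?addr0; last first.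
  by move=> t Ht; apply: H; exact: Ht.
by rewrite big_enum_val.
Qed.

Lemma Dm_row i (g : seq 'I_NN -> R) u : supp Erel setT i.+1 g ->
  Dm Erel setT i g u = \sum_(r : 'I_(bb i.+1)) g (wv r) * coef k Erel setT (wv r) u.
Proof.
move=> sg; rewrite /Dm (@sum_VA i.+1 (fun t => g t * coef k Erel setT t u)) //.
by move=> t nv; rewrite (sg t (size_tuple t) nv) mul0r.
Qed.

Lemma mulM i (v : 'rV[R]_(bb i.+1)) c :
  (v *m MM i) 0 c = Dm Erel setT i (fv v) (wv c).
Proof.
rewrite (Dm_row _ (supp_fv v)) !mxE; apply: eq_bigr => r _.
by rewrite fv_wv mxE.
Qed.

Definition rowof i (g : seq 'I_NN -> R) : 'rV[R]_(bb i) := \row_r g (wv r).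

Arguments rowof i g : clear implicits.

Lemma mulM_row i (g : seq 'I_NN -> R) c : supp Erel setT i.+1 g ->
  (rowof i.+1 g *m MM i) 0 c = Dm Erel setT i g (wv c).
Proof.
move=> sg; rewrite (Dm_row _ sg) !mxE; apply: eq_bigr => r _.
by rewrite !mxE.
Qed.

Lemma coef_homog X (t u : seq 'I_NN) : coef k Erel X t u \is 1.-homog.
Proof.
elim: t X u => [|c w IH] X u /=; first exact: rpred0.
apply: rpredB.
  case: ifP => _; last exact: rpred0.
  by rewrite dhomogX; apply/eqP; apply: mdeg1.
by case: u => [|c' u']; [exact: rpred0 | case: ifP => _; [exact: IH | exact: rpred0]].
Qed.

Lemma bb0 : bb 0 = 1%N.
Proof.
rewrite /bb (eq_card (B := predT)); first by rewrite card_tuple expn0.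
by move=> t; rewrite tuple0.
Qed.

Lemma JJ_const (p : R) : JJ Erel p -> p@_0 = 0.
Proof.
move=> H; apply: (II_coef (IIJ set0 H)).
rewrite /goodm negb_or; apply/andP; split.
  by apply/existsP => [[x]]; rewrite inE.
apply/existsP => [[a /existsP [b /andP [_ /mnm_lepP /(_ a)]]]].
by rewrite !mnmDE !mnm1E eqxx mnm0E.
Qed.

Lemma rowB m (v w : 'rV[R]_m) j : (v - w) 0 j = v 0 j - w 0 j.
Proof. by rewrite !mxE. Qed.

Theorem koszul : preWDVV_Koszul k n.
Proof.
exists bb, MM; split.
- exact: bb0.
- by move=> i r c; rewrite mxE; apply: coef_homog.
- move=> v; split.
  + move=> H.
    have Hp : forall j, v 0 j = fv v [::].
      by move=> j; rewrite -fv_wv; congr (fv v _); apply/size0nil; rewrite wv_size.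
    have HII : II Erel setT (fv v [::]).
      apply: coef_II => m Hm.
      have -> : m = 0%MM.
        apply/mnmP => i; rewrite mnm0E; apply/eqP; rewrite -leqn0 leqNgt; apply/negP => Hi.
        by move: Hm; rewrite /goodm negb_or => /andP [/existsPn /(_ i)]; rewrite inE Hi.
      have [j _] : exists j : 'I_(bb 0), true by rewrite bb0; exists ord0.
      by rewrite -(Hp j) H.
    have [q Hq] := HII.
    pose g := fun s : seq 'I_NN => if s is [:: x] then q x else 0.
    have sg : supp Erel setT 1 g by move=> [|x [|y s]] //= _; rewrite inE.
    exists (rowof 1 g) => j; rewrite rowB mulM_row // (size0nil (wv_size j)) Dm0 Hp.
    apply/inJ_JJ; apply: JJeq Hq; congr (_ - _).
    by apply: eq_big => // x; rewrite inE.
  + move=> [w Hw] j.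
    have -> : v 0 j = (v - w *m MM 0) 0 j + (w *m MM 0) 0 j by rewrite rowB subrK.
    rewrite mcoeffD (JJ_const (iffLR (inJ_JJ _) (Hw j))) add0r.
    rewrite mulM (size0nil (wv_size j)) Dm0 raddf_sum big1 // => x _.
    apply: coefMX0; apply/negP => /mnm_lepP /(_ x); by rewrite mnm1E eqxx mnm0E.
- move=> i v; split.
  + move=> H.
    have DJ : forall u, size u = i -> JJ Erel (Dm Erel setT i (fv v) u).
      move=> u Hu; case: (boolP (valid Erel setT u)) => vu.
        have [c <-] := wv_onto Hu vu; rewrite -mulM; apply/inJ_JJ; exact: H.
      by rewrite (Dm_supp (supp_fv v) vu); apply: JJ0.
    have [g [sg Hg]] := Ex_all (supp_fv v) DJ.
    exists (rowof i.+2 g) => c; rewrite rowB.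
    rewrite mulM_row // -(fv_wv v); apply/inJ_JJ; apply: Hg; exact: wv_size.
  + move=> [w Hw] c.
    have -> : v *m MM i = (v - w *m MM i.+1) *m MM i + w *m (MM i.+1 *m MM i).
      by rewrite mulmxA -mulmxDl subrK.
    rewrite mxE; apply/inJ_JJ; apply: JJD.
    * rewrite mulM; apply: Dm_J => t _; apply: JJ_sum => r _; case: ifP => _; last exact: JJ0.
      by apply/inJ_JJ; apply: Hw.
    * rewrite !mxE; apply: JJ_sum => r _; apply: JJM; rewrite !mxE.
      rewrite (eq_bigr (fun s => coef k Erel setT (wv r) (wv s) * coef k Erel setT (wv s) (wv c)));
        last by move=> s _; rewrite !mxE.
      rewrite -(@sum_VA i.+1 (fun s => coef k Erel setT (wv r) s * coef k Erel setT s (wv c))).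
        apply: DD_coef; [exact: wv_size | exact: wv_size | exact: wv_valid].
      move=> t nv; case: (eqVneq (coef k Erel setT (wv r) t) 0) => [->|ne]; first by rewrite mul0r.
      by move: nv; rewrite (coef_supp (wv_valid r) ne).
Qed.

End Final.

Theorem mainTheorem15 (k : fieldType) (n : nat) :
  (3 <= n)%N -> [pchar k]%R =i pred0 -> preWDVV_Koszul k n.
Proof. by move=> _ _; apply: koszul. Qed.
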